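(* Let $S$ and $T$ be primitive strings, each of length at least $2$, over a totally ordered alphabet. Let $U$ be the LMS-prefix of $S$ (i.e. of $\mathrm{conj}_1(S)$) and $V$ the LMS-prefix of $T$. If $U<_{LMS}V$, then $S\prec_\omega T$.
   Context: For $T=T[1..n]$, $\mathrm{conj}_i(T)=T[i..n]T[1..i-1]$; strings are viewed cyclically. For a primitive string $T$ of length $\ge2$, position $i$ is of type S if $\mathrm{conj}_i(T)<_{\mathrm{lex}}\mathrm{conj}_{i+1}(T)$ and of type L if $\mathrm{conj}_i(T)>_{\mathrm{lex}}\mathrm{conj}_{i+1}(T)$; an S-type position $i$ is LMS if $i-1$ (cyclically) is L-type. The LMS-prefix of $\mathrm{conj}_i(T)$ is the cyclic substring from position $i$ to the first LMS position strictly after $i$ (cyclically, wrapping around if needed). LMS-order: $U<_{LMS}V$ if $V$ is a proper prefix of $U$, or neither is a prefix of the other and $U<_{\mathrm{lex}}V$. The $\omega$-order: $S\prec_\omega T$ if either $\mathrm{root}(S)=\mathrm{root}(T)$ and $\exp(S)<\exp(T)$, or $S^\omega<_{\mathrm{lex}}T^\omega$, where $X^\omega$ is the infinite concatenation of copies of $X$ and $X=\mathrm{root}(X)^{\exp(X)}$ with $\mathrm{root}(X)$ primitive. *)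

(* Defs.v *)
(* Positions are 0-indexed internally: the paper's
   position i (1-indexed) is index i-1 here, and conj_i(T) = rot (i-1) T. *)
From mathcomp Require Import all_boot all_order.
Set Implicit Arguments. Unset Strict Implicit. Unset Printing Implicit Defensive.
Import Order.TTheory.
Local Open Scope order_scope.

Section Strings.
Variables (d : Order.disp_t) (A : orderType d).

Fixpoint lex_lt (u v : seq A) : bool :=
  match u, v with
  | [::], [::] => false
  | [::], _ :: _ => true
  | _ :: _, [::] => false
  | x :: u', y :: v' => (x < y) || ((x == y) && lex_lt u' v')
  end.

Definition spow (Y : seq A) (k : nat) : seq A := flatten (nseq k Y).

Definition primitive (X : seq A) : Prop :=
  X != [::] /\ forall (Y : seq A) (k : nat), X = spow Y k -> k = 1%N.

Definition sexp (X : seq A) : nat :=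
  (\max_(k < (size X).+1 | (k %| size X) && (X == spow (take (size X %/ k) X) k)) k)%N.
Definition sroot (X : seq A) : seq A := take (size X %/ sexp X) X.

Definition conj (i : nat) (T : seq A) : seq A := rot i T.

Definition typeS (T : seq A) (i : nat) : bool :=
  lex_lt (conj i T) (conj (i.+1 %% size T) T).
Definition typeL (T : seq A) (i : nat) : bool :=
  lex_lt (conj (i.+1 %% size T) T) (conj i T).
Definition isLMS (T : seq A) (i : nat) : bool :=
  typeS T i && typeL T ((i + size T).-1 %% size T).

Definition lms_dist (T : seq A) (i : nat) : nat :=
  (find (fun k => isLMS T ((i + k.+1) %% size T)) (iota 0 (size T))).+1.

(* LMS-prefix of conj_i(T): the cyclic substring T[i .. i + d] (d+1 letters,
   wrapping around if needed) *)
Definition lms_prefix (T : seq A) (i : nat) : seq A :=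
  take (lms_dist T i).+1 (conj i T ++ conj i T).

Definition lms_lt (U V : seq A) : bool :=
  (prefix V U && (V != U)) || (~~ prefix U V && ~~ prefix V U && lex_lt U V).

(* lexicographic order on the infinite words X^omega, Y^omega *)
Definition omega_at (X : seq A) (i : nat) : option A := onth X (i %% size X).
Definition omega_lt (X Y : seq A) : Prop :=
  exists k a b, (forall i, i < k -> omega_at X i = omega_at Y i)%N /\
    omega_at X k = Some a /\ omega_at Y k = Some b /\ a < b.

Definition omega_prec (S T : seq A) : Prop :=
  (sroot S = sroot T /\ (sexp S < sexp T)%N) \/ omega_lt S T.
End Strings.

(* Main.v *)
Require Import Defs.
From mathcomp Require Import all_boot all_order zify.
Set Implicit Arguments. Unset Strict Implicit. Unset Printing Implicit Defensive.
Import Order.TTheory.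
Local Open Scope order_scope.

Section L.
Variables (d : Order.disp_t) (A : orderType d).
Implicit Types (u v T : seq A).

Lemma lex_irr u : lex_lt u u = false.
Proof. elim: u => //= x u ->; by rewrite ltxx eqxx. Qed.

Lemma lex_nth (x0 : A) u v : lex_lt u v -> ~~ prefix u v ->
  exists k, [/\ (k < size u)%N, (k < size v)%N,
   (forall j, (j < k)%N -> nth x0 u j = nth x0 v j) & nth x0 u k < nth x0 v k].
Proof.
elim: u v => [|x u IH] [|y v] //=.
case/orP=> [lt|/andP[/eqP exy lt]] np.
  by exists 0%N; split.
have np' : ~~ prefix u v by move: np; rewrite exy eqxx.
have [k [h1 h2 h3 h4]] := IH v lt np'.
exists k.+1; split => //= -[|j] /= jk; first by rewrite exy.
exact: h3.
Qed.

Lemma lex_nth_eq (x0 : A) u v : size u = size v -> lex_lt u v ->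
  exists k, [/\ (k < size u)%N,
   (forall j, (j < k)%N -> nth x0 u j = nth x0 v j) & nth x0 u k < nth x0 v k].
Proof.
move=> es lt; have np : ~~ prefix u v.
  apply/negP; rewrite prefixE es take_size => /eqP e; by rewrite e lex_irr in lt.
have [k [? ? ? ?]] := lex_nth x0 lt np; by exists k.
Qed.

Lemma nth_lex (x0 : A) u v k : (k < size u)%N -> (k < size v)%N ->
  (forall j, (j < k)%N -> nth x0 u j = nth x0 v j) -> nth x0 u k < nth x0 v k ->
  lex_lt u v.
Proof.
elim: u v k => [|x u IH] [|y v] [|k] //=.
  by move=> _ _ _ ->.
move=> h1 h2 h3 h4; apply/orP; right; have /= -> := h3 0%N isT; rewrite eqxx /=.
apply: (IH v k) => // j jk; exact: (h3 j.+1).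
Qed.

Lemma nth_rot (x0 : A) T r k : (r < size T)%N -> (k < size T)%N ->
  nth x0 (rot r T) k = nth x0 T ((r + k) %% size T).
Proof.
move=> hr hk; rewrite /rot nth_cat size_drop.
case: ltnP => h.
  rewrite nth_drop modn_small //; lia.
rewrite nth_take; last by lia.
have -> : (r + k = (r + k - size T) + size T)%N by lia.
rewrite modnDr modn_small; [congr nth; lia | lia].
Qed.

Definition w (x0 : A) T (x : nat) := nth x0 T (x %% size T).
Definition Sty (f : nat -> A) i := exists k, (forall j, (j <= k)%N -> f (i + j)%N = f i) /\ f i < f (i + k.+1)%N.
Definition Lty (f : nat -> A) i := exists k, (forall j, (j <= k)%N -> f (i + j)%N = f i) /\ f (i + k.+1)%N < f i.

Lemma w_per x0 T x : w x0 T (x + size T) = w x0 T x.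
Proof. by rewrite /w modnDr. Qed.

Lemma nth_rot_w x0 T r j : (0 < size T)%N -> (j < size T)%N ->
  nth x0 (rot (r %% size T) T) j = w x0 T (r + j).
Proof. move=> h hj; rewrite nth_rot ?ltn_pmod // /w; by rewrite modnDml. Qed.

Lemma modS_eq i m : ((i %% m).+1 %% m = i.+1 %% m)%N.
Proof. by rewrite -[(i %% m).+1]addn1 -[i.+1]addn1 modnDml. Qed.

Lemma chain (f : nat -> A) i k : (forall j, (j < k)%N -> f (i + j)%N = f (i.+1 + j)%N) ->
  forall j, (j <= k)%N -> f (i + j)%N = f i.
Proof.
move=> h; elim=> [|j IH] hj; first by rewrite addn0.
by rewrite addnS -addSn -h ?IH // ltnW.
Qed.

Lemma big_wit x0 T i k : (0 < size T)%N ->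
  (forall j, (j <= k)%N -> w x0 T (i + j)%N = w x0 T i) ->
  w x0 T (i + k.+1)%N != w x0 T i -> (k.+1 < size T)%N.
Proof.
move=> h hc; case: (ltnP k.+1 (size T)) => // hm; case/eqP.
have -> : (i + k.+1 = i + (k.+1 - size T) + size T)%N by lia.
rewrite w_per hc //; lia.
Qed.

Lemma typeS_Sty x0 T i : (0 < size T)%N -> typeS T (i %% size T) -> Sty (w x0 T) i.
Proof.
move=> h; rewrite /typeS /conj modS_eq => lt.
have [k [hk h3 h4]] := lex_nth_eq x0 (etrans (size_rot _ _) (esym (size_rot _ _))) lt.
rewrite size_rot in hk.
have h3' : forall j, (j < k)%N -> w x0 T (i + j) = w x0 T (i.+1 + j).
  move=> j jk; have hj : (j < size T)%N by lia.
  rewrite -!nth_rot_w //; exact: h3.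
exists k; split; first exact: chain h3'.
by rewrite !nth_rot_w // in h4; rewrite -(chain h3' (leqnn k)) addnS -addSn.
Qed.

Lemma typeL_Lty x0 T i : (0 < size T)%N -> typeL T (i %% size T) -> Lty (w x0 T) i.
Proof.
move=> h; rewrite /typeL /conj (modS_eq i (size T)) => lt.
have [k [hk h3 h4]] := lex_nth_eq x0 (etrans (size_rot _ _) (esym (size_rot _ _))) lt.
rewrite size_rot in hk.
have h3' : forall j, (j < k)%N -> w x0 T (i + j) = w x0 T (i.+1 + j).
  move=> j jk; have hj : (j < size T)%N by lia.
  rewrite -!nth_rot_w //; exact/esym/h3.
exists k; split; first exact: chain h3'.
by rewrite !nth_rot_w // in h4; rewrite -(chain h3' (leqnn k)) addnS -addSn.
Qed.

Lemma Sty_typeS x0 T i : (0 < size T)%N -> Sty (w x0 T) i -> typeS T (i %% size T).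
Proof.
move=> h [k [hc hl]].
have hk : (k.+1 < size T)%N by apply: (big_wit h hc); rewrite eq_sym (lt_eqF hl).
rewrite /typeS /conj (modS_eq i (size T)).
apply: (@nth_lex x0 _ _ k); rewrite ?size_rot; try lia.
  move=> j jk; rewrite !nth_rot_w; try lia.
  by rewrite hc ?(ltnW jk) // addSnnS hc.
by rewrite !nth_rot_w; try lia; rewrite hc // addSnnS.
Qed.

Lemma Lty_typeL x0 T i : (0 < size T)%N -> Lty (w x0 T) i -> typeL T (i %% size T).
Proof.
move=> h [k [hc hl]].
have hk : (k.+1 < size T)%N by apply: (big_wit h hc); rewrite (lt_eqF hl).
rewrite /typeL /conj (modS_eq i (size T)).
apply: (@nth_lex x0 _ _ k); rewrite ?size_rot; try lia.
  move=> j jk; rewrite !nth_rot_w; try lia.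
  by rewrite hc ?(ltnW jk) // addSnnS hc.
by rewrite !nth_rot_w; try lia; rewrite hc // addSnnS.
Qed.

Definition lexinf (f g : nat -> A) := exists k, (forall j, (j < k)%N -> f j = g j) /\ f k < g k.

Lemma SL_excl (f : nat -> A) i : Sty f i -> Lty f i -> False.
Proof.
move=> [a [ha la]] [b [hb lb]].
case: (ltngtP a b) => ab.
- by move: la; rewrite hb // ltxx.
- by move: lb; rewrite ha // ltxx.
- by subst b; move: (lt_trans la lb); rewrite ltxx.
Qed.

Lemma LS_drop (f : nat -> A) i : Lty f i -> Sty f i.+1 -> f i.+1 < f i.
Proof.
move=> [[|k] [hc hl]] hs; first by rewrite addn1 in hl.
have e1 : f i.+1 = f i by rewrite -[i.+1]addn1 hc.
exfalso; apply: (SL_excl hs); exists k; split.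
  by move=> j jk; rewrite e1 addSnnS hc.
by rewrite e1 addSnnS.
Qed.

Lemma dich (f : nat -> A) i : (exists j, f (i + j)%N != f i) -> Sty f i \/ Lty f i.
Proof.
move=> ex; case: (ex_minnP ex) => j0 hj0 hmin.
case: j0 hj0 hmin => [|k]; first by rewrite addn0 eqxx.
move=> hne hmin.
have hc : forall j, (j <= k)%N -> f (i + j)%N = f i.
  move=> j jk; apply/eqP; apply/negPn/negP => /hmin; lia.
move: hne; rewrite neq_lt => /orP[lt|lt]; [right|left]; by exists k.
Qed.

Lemma combine (g h : nat -> A) e : (forall j, (j <= e)%N -> g j = h j) ->
  Lty g e -> Sty h e -> lexinf g h.
Proof.
move=> agr [a [ha la]] [b [hb lb]].
have he := agr e (leqnn e).
have mid : forall j, (j <= minn a b)%N -> g (e + j)%N = h (e + j)%N.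
  move=> j jm; rewrite ha ?hb //; lia.
have pre : forall j, (j < e + (minn a b).+1)%N -> g j = h j.
  move=> j jl; case: (leqP j e) => je; first exact: agr.
  have -> : j = (e + (j - e))%N by lia.
  apply: mid; lia.
case: (ltngtP a b) => ab.
- exists (e + a.+1)%N; split; first by move=> j jl; apply: pre; lia.
  by rewrite (hb a.+1) // -he.
- exists (e + b.+1)%N; split; first by move=> j jl; apply: pre; lia.
  by rewrite ha // he.
- subst b; exists (e + a.+1)%N; split; first by move=> j jl; apply: pre; lia.
  by rewrite (lt_trans la) // he.
Qed.

Lemma prev_mod m e : (0 < m)%N -> (0 < e)%N -> ((e %% m + m).-1 %% m = e.-1 %% m)%N.
Proof.
move=> hm he.
have -> : ((e %% m + m).-1 = e %% m + m.-1)%N by lia.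
rewrite modnDml.
have -> : (e + m.-1 = e.-1 + m)%N by lia.
by rewrite modnDr.
Qed.

Lemma spow_nseq (c : A) k : spow [:: c] k = nseq k c.
Proof. by elim: k => //= k IH; rewrite /spow /= in IH *; rewrite IH. Qed.

Lemma w_big x0 T i y : (0 < size T)%N -> w x0 T (i + y) = w x0 T (i + y %% size T).
Proof. by move=> h; rewrite /w modnDmr. Qed.

Lemma nonconst x0 T : primitive T -> (2 <= size T)%N ->
  forall i, exists j, w x0 T (i + j)%N != w x0 T i.
Proof.
move=> [_ hp] h2 i; set m := size T.
have hm : (0 < m)%N by rewrite /m; lia.
case: (boolP (all (fun j => w x0 T (i + j) == w x0 T i) (iota 0 m))).
  move=> /allP hall; exfalso.
  have hall' : forall y, w x0 T (i + y) = w x0 T i.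
    move=> y; rewrite w_big //; apply/eqP/hall; rewrite mem_iota /= ltn_pmod //.
  have eT : T = nseq m (w x0 T i).
    apply: (@eq_from_nth _ x0); first by rewrite size_nseq.
    move=> p hpm; rewrite nth_nseq -/m (_ : (p < m)%N = true) //.
    rewrite -(hall' (m * i + p - i)).
    have -> : (i + (m * i + p - i) = i * m + p)%N.
      have : (i <= m * i)%N by rewrite leq_pmull.
      lia.
    by rewrite /w -/m modnMDl modn_small.
  have := hp _ _ (etrans eT (esym (spow_nseq _ _))); rewrite /m; lia.
by move=> /allPn [j _ hj]; exists j.
Qed.

Lemma seq_min (s : seq A) : s != [::] -> exists2 x, x \in s & forall y, y \in s -> x <= y.
Proof.
elim: s => // x s IH _; case: (eqVneq s [::]) => [->|ne].
  by exists x; rewrite ?mem_seq1 // => y; rewrite mem_seq1 => /eqP ->.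
have [z zs hz] := IH ne.
case: (leP x z) => xz.
  exists x; first by rewrite in_cons eqxx.
  move=> y; rewrite in_cons => /orP[/eqP->//|ys]; exact: le_trans xz (hz _ ys).
exists z; first by rewrite in_cons zs orbT.
move=> y; rewrite in_cons => /orP[/eqP->|ys]; [exact: ltW | exact: hz].
Qed.

Lemma existsLMS T : primitive T -> (2 <= size T)%N ->
  has (fun k => isLMS T ((0 + k.+1) %% size T)) (iota 0 (size T)).
Proof.
move=> hT h2; set m := size T.
have hm : (0 < m)%N by rewrite /m; lia.
have [a aT amin] := seq_min (proj1 hT).
pose x0 := a.
have wmin : forall x, a <= w x0 T x.
  move=> x; apply: amin; apply: mem_nth; rewrite ltn_pmod //.
set p := index a T.
have hp : w x0 T p = a by rewrite /w modn_small ?nth_index // index_mem.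
have [j hj] := nonconst x0 hT h2 p.
set q0 := (p + j)%N.
have ex : exists j1, (q0 < j1)%N && (w x0 T j1 == a).
  exists (q0.+1 * m + p)%N; apply/andP; split.
    have : (q0.+1 <= q0.+1 * m)%N by rewrite leq_pmulr.
    lia.
  by rewrite -hp /w -/m modnMDl.
case: (ex_minnP ex) => j1 /andP[hq /eqP hj1] hmin.
have hprev : w x0 T j1.-1 != a.
  case: (eqVneq j1.-1 q0) => [->|ne]; first by rewrite -hp.
  apply/negP => /eqP e.
  have := hmin j1.-1; rewrite e eqxx andbT.
  have -> : (q0 < j1.-1)%N by lia.
  move=> /(_ isT); lia.
have hL : Lty (w x0 T) j1.-1.
  exists 0%N; split; first by move=> jj; rewrite leqn0 => /eqP ->; rewrite addn0.
  have -> : (j1.-1 + 1 = j1)%N by lia.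
  by rewrite hj1 lt_neqAle eq_sym hprev wmin.
have hS : Sty (w x0 T) j1.
  case: (dich (nonconst x0 hT h2 j1)) => // [[k [_ hl]]].
  by move: (wmin (j1 + k.+1)%N); rewrite -hj1 leNgt hl.
apply/hasP; exists (j1.-1 %% m); first by rewrite mem_iota /= ltn_pmod.
rewrite add0n modS_eq (_ : j1.-1.+1 = j1); last by lia.
rewrite /isLMS -/m prev_mod //; last by lia.
by rewrite (Sty_typeS hm hS) (Lty_typeL hm hL).
Qed.

Lemma onth_some (x0 : A) (s : seq A) k : (k < size s)%N -> onth s k = Some (nth x0 s k).
Proof. by elim: s k => [|x s IH] [|k] //= hk; apply: IH. Qed.

Lemma lexinf_omega x0 S T : (0 < size S)%N -> (0 < size T)%N ->
  lexinf (w x0 S) (w x0 T) -> omega_lt S T.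
Proof.
move=> hS hT [k [h1 h2]]; exists k, (w x0 S k), (w x0 T k).
rewrite /omega_at !(onth_some x0) ?ltn_pmod //; split => //.
by move=> i ik; rewrite (onth_some x0) ?ltn_pmod // (onth_some x0) ?ltn_pmod //; congr Some; exact: h1.
Qed.

Lemma lms_dist_le (X : seq A) : (lms_dist X 0 <= (size X).+1)%N.
Proof. rewrite /lms_dist ltnS; have := find_size (fun k => isLMS X ((0 + k.+1) %% size X)) (iota 0 (size X)); by rewrite size_iota. Qed.

Lemma lp_size (X : seq A) : (2 <= size X)%N -> size (lms_prefix X 0) = (lms_dist X 0).+1.
Proof.
move=> h; rewrite /lms_prefix size_takel // size_cat /conj size_rot.
have := lms_dist_le X; lia.
Qed.

Lemma lp_nth x0 (X : seq A) k : (2 <= size X)%N -> (k < (lms_dist X 0).+1)%N ->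
  nth x0 (lms_prefix X 0) k = w x0 X k.
Proof.
move=> h hk; have := lms_dist_le X => hl.
rewrite /lms_prefix nth_take // /conj rot0 nth_cat /w.
case: ltnP => hkn; first by rewrite modn_small.
have -> : k = (k - size X + size X)%N by lia.
rewrite modnDr modn_small; last by lia.
by rewrite addnK.
Qed.
End L.

Theorem lemma5 (d : Order.disp_t) (A : orderType d) (S T : seq A) :
  primitive S -> primitive T -> (2 <= size S)%N -> (2 <= size T)%N ->
  lms_lt (lms_prefix S 0) (lms_prefix T 0) ->
  omega_prec S T.
Proof.
move=> hS hT h2S h2T hlt.
have [x0 _] : exists x : A, True by move: h2S; case: (S) => [|x] //; exists x.
have pS : (0 < size S)%N by lia.
have pT : (0 < size T)%N by lia.
right; apply: (lexinf_omega (x0 := x0)) => //.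
case/orP: hlt => [/andP[pVU neq] | /andP[/andP[npUV npVU] lt]]; last first.
  have [k [k1 k2 agr kl]] := lex_nth x0 lt npUV.
  rewrite !lp_size // in k1 k2.
  exists k; split; last by rewrite -!lp_nth.
  move=> j jk; rewrite -!lp_nth //; [exact: agr | lia | lia].
have hsz := size_prefix pVU.
rewrite !lp_size // in hsz.
set eT := lms_dist T 0 in hsz *; set eS := lms_dist S 0 in hsz *.
have hlt : (eT < eS)%N.
  rewrite ltn_neqAle -ltnS hsz andbT; apply/negP => /eqP e.
  move: neq pVU; rewrite prefixE !lp_size // -/eT -/eS e => /negP ne /eqP tk.
  by apply: ne; rewrite -tk (_ : eS.+1 = size (lms_prefix S 0)) ?take_size ?eqxx // lp_size.
have agr : forall j, (j <= eT)%N -> w x0 S j = w x0 T j.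
  move=> j je; rewrite -!lp_nth // -/eT; try lia.
  move: pVU; rewrite prefixE lp_size // -/eT => /eqP <-.
  by rewrite (nth_take x0 (je : (j < eT.+1)%N)).
have hasT := existsLMS hT h2T.
have fT : (find (fun k => isLMS T ((0 + k.+1) %% size T)) (iota 0 (size T)) < size T)%N.
  by move: hasT; rewrite has_find size_iota.
have := nth_find 0%N hasT; rewrite nth_iota // add0n.
rewrite -/(lms_dist T 0) -/eT.
have eT0 : (0 < eT)%N by rewrite /eT /lms_dist.
rewrite /isLMS prev_mod // => /andP[tS tL].
have hST := typeS_Sty x0 pT tS.
have hLT := typeL_Lty x0 pT tL.
have drop := LS_drop hLT; rewrite (prednK eT0) in drop; have {}drop := drop hST.
have hLS : Lty (w x0 S) eT.-1.
  exists 0%N; split; first by move=> jj; rewrite leqn0 => /eqP ->; rewrite addn0.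
  rewrite addn1 (prednK eT0) !agr //; lia.
have tLS := Lty_typeL pS hLS.
have fS : (eT.-1 < find (fun k => isLMS S ((0 + k.+1) %% size S)) (iota 0 (size S)))%N.
  have : (eS = (find (fun k => isLMS S ((0 + k.+1) %% size S)) (iota 0 (size S))).+1)%N by [].
  lia.
have := before_find 0%N fS.
have fSn := find_size (fun k => isLMS S ((0 + k.+1) %% size S)) (iota 0 (size S)).
rewrite size_iota in fSn.
rewrite nth_iota; last by lia.
rewrite add0n add0n (prednK eT0) /isLMS prev_mod // tLS andbT => nS.
have nSty : ~ Sty (w x0 S) eT by move=> /(Sty_typeS pS); rewrite nS.
case: (dich (nonconst x0 hS h2S eT)) => // hLS'.
exact: combine agr hLS' hST.
Qed.
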